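(* If $x\in\mathcal A=\mathcal O(SU_q(2))$ satisfies $xb=bx$ for all $b\in\mathcal B=\mathcal O(S^2_q)$, then $x$ is a scalar multiple of the identity.
   Context: Fix $q\in(0,1]$. $\mathcal A=\mathcal O(SU_q(2))$ is the unital $*$-algebra generated by $a,b,c,d$ subject to $ab=qba,\ ac=qca,\ bd=qdb,\ cd=qdc,\ bc=cb,\ ad=1+qbc,\ da=1+q^{-1}bc$, with $a^*=d,\ b^*=-qc,\ c^*=-q^{-1}b,\ d^*=a$. It has a linear basis of matrix coefficients $t^l_{ij}$ ($l\in\frac12\mathbb N$, $i,j\in\{-l,\dots,l\}$) of the irreducible corepresentations, with $a=t^{1/2}_{-1/2,-1/2}$, $b=t^{1/2}_{-1/2,1/2}$, $c=t^{1/2}_{1/2,-1/2}$, $d=t^{1/2}_{1/2,1/2}$. The Podleś sphere is the $*$-subalgebra $\mathcal B=\mathcal O(S^2_q)=\mathrm{span}\{t^l_{i0}:l\in\mathbb N,\ i\in\{-l,\dots,l\}\}$ (the fixed points of the circle action $t^l_{ij}\mapsto z^{2j}t^l_{ij}$); it is generated by $A=-q^{-1}bc$, $B=-q^{-1}ab$, $B^*$. *)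

(* Defs.v *)
From HB Require Import structures.
From mathcomp Require Import all_boot all_order all_algebra.
From mathcomp Require Import all_reals.
From mathcomp Require Import complex.
Set Implicit Arguments. Unset Strict Implicit. Unset Printing Implicit Defensive.
Import Order.TTheory GRing.Theory Num.Theory.
Local Open Scope ring_scope.

(* Scalars: the complex numbers C := R[i] over a real field R : realType
   (R = the reals gives the usual C). The deformation parameter q is real. *)

Definition SUq_rels (R : realType) (q : R) (A : algType R[i]) (a b c d : A) : Prop :=
  let qc := real_complex R q in
  [/\ [/\ a * b = qc *: (b * a), a * c = qc *: (c * a), b * d = qc *: (d * b)
         & c * d = qc *: (d * c)],
      b * c = c * b,
      a * d = 1 + qc *: (b * c) & d * a = 1 + qc^-1 *: (b * c)].

Inductive gen_subalg (K : nzRingType) (A : lalgType K) (s : seq A) : A -> Prop :=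
  | gen_base x : x \in s -> gen_subalg s x
  | gen_one : gen_subalg s 1
  | gen_add x y : gen_subalg s x -> gen_subalg s y -> gen_subalg s (x + y)
  | gen_scale (k : K) x : gen_subalg s x -> gen_subalg s (k *: x)
  | gen_mul x y : gen_subalg s x -> gen_subalg s y -> gen_subalg s (x * y).

(* (A, a, b, c, d) is (a presentation of) O(SU_q(2)): the universal unital
   C-algebra generated by a, b, c, d subject to SUq_rels, i.e. A is generated
   by a b c d, they satisfy the relations, and for every C-algebra S with
   elements satisfying the relations there is a unital algebra morphism
   A -> S sending a b c d to them. *)
Definition is_OSUq2 (R : realType) (q : R) (A : algType R[i]) (a b c d : A) : Prop :=
  [/\ SUq_rels q a b c d,
      (forall x : A, gen_subalg [:: a; b; c; d] x) &
      (forall (S : algType R[i]) (a' b' c' d' : S), SUq_rels q a' b' c' d' ->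
         exists f : A -> S,
           [/\ (forall x y, f (x + y) = f x + f y),
               (forall (k : R[i]) x, f (k *: x) = k *: f x),
               (forall x y, f (x * y) = f x * f y), f 1 = 1 &
               [/\ f a = a', f b = b', f c = c' & f d = d']])].

Definition is_SUq_star (R : realType) (q : R) (A : algType R[i]) (a b c d : A)
    (st : A -> A) : Prop :=
  let qc := real_complex R q in
  [/\ (forall x y, st (x + y) = st x + st y),
      (forall (k : R[i]) x, st (k *: x) = conjc k *: st x),
      (forall x y, st (x * y) = st y * st x),
      (forall x, st (st x) = x) &
      [/\ st a = d, st b = - (qc *: c), st c = - (qc^-1 *: b) & st d = a]].

Definition podles (R : realType) (q : R) (A : algType R[i]) (a b c d : A)
    (st : A -> A) : A -> Prop :=
  let qc := real_complex R q in
  let gA := - (qc^-1 *: (b * c)) in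
  let gB := - (qc^-1 *: (a * b)) in
  gen_subalg [:: gA; gB; st gB].

(* Main.v *)
Require Import Defs.
From HB Require Import structures.
From mathcomp Require Import all_boot all_order all_algebra all_reals complex.
From mathcomp Require Import boolp ring zify.
Import Order.TTheory GRing.Theory Num.Theory.
Local Open Scope ring_scope.

From mathcomp Require Import boolp ring zify.
Section Model.
Variable R : realType.
Local Notation C := (R[i]).
Definition V := int -> int -> C.
Definition vadd (u v : V) : V := fun n k => u n k + v n k.
Definition vscl (s : C) (u : V) : V := fun n k => s * u n k.
Definition islin (f : V -> V) :=
  (forall u v, f (vadd u v) = vadd (f u) (f v)) /\ (forall s u, f (vscl s u) = vscl s (f u)).
Record Op := MkOp { opf :> V -> V; opl : islin opf }.

Lemma op_ext (f g : Op) : (forall v n k, f v n k = g v n k) -> f = g.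
Proof.
case: f g => f fl [g gl] /= H.
have E : f = g by apply: funext => v; apply: funext => n; apply: funext => k; exact: H.
subst g; congr MkOp; exact: Prop_irrelevance.
Qed.

HB.instance Definition _ := gen_eqMixin Op.
HB.instance Definition _ := gen_choiceMixin Op.

Lemma lin0 : islin (fun _ _ _ => 0).
Proof. by split=> *; apply: funext => n; apply: funext => k; rewrite /vadd /vscl ?addr0 ?mulr0. Qed.
Lemma linD (f g : Op) : islin (fun v => vadd (f v) (g v)).
Proof.
case: f g => f [f1 f2] [g [g1 g2]] /=; split=> *; rewrite ?f1 ?g1 ?f2 ?g2;
  apply: funext => n; apply: funext => k; rewrite /vadd /vscl.
  by rewrite addrACA.
by rewrite mulrDr.
Qed.
Lemma linN (f : Op) : islin (fun v => vscl (-1) (f v)).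
Proof.
case: f => f [f1 f2] /=; split=> *; rewrite ?f1 ?f2;
  apply: funext => n; apply: funext => k; rewrite /vadd /vscl.
  by rewrite mulrDr.
by rewrite mulrCA.
Qed.
Lemma linZ s (f : Op) : islin (fun v => vscl s (f v)).
Proof.
case: f => f [f1 f2] /=; split=> *; rewrite ?f1 ?f2;
  apply: funext => n; apply: funext => k; rewrite /vadd /vscl.
  by rewrite mulrDr.
by rewrite mulrCA.
Qed.
Lemma lin1 : islin id. Proof. by split. Qed.
Lemma linM (f g : Op) : islin (fun v => f (g v)).
Proof. case: f g => f [f1 f2] [g [g1 g2]] /=; split=> *; by rewrite ?g1 ?f1 ?g2 ?f2. Qed.

Definition op0 := MkOp _ lin0.
Definition opD f g := MkOp _ (linD f g).
Definition opN f := MkOp _ (linN f).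
Definition opZ s f := MkOp _ (linZ s f).
Definition op1 := MkOp _ lin1.
Definition opM f g := MkOp _ (linM f g).

Lemma opDA : associative opD.
Proof. by move=> *; apply: op_ext => * /=; rewrite /vadd addrA. Qed.
Lemma opDC : commutative opD.
Proof. by move=> *; apply: op_ext => * /=; rewrite /vadd addrC. Qed.
Lemma op0D : left_id op0 opD.
Proof. by move=> *; apply: op_ext => * /=; rewrite /vadd add0r. Qed.
Lemma opND : left_inverse op0 opN opD.
Proof. by move=> *; apply: op_ext => * /=; rewrite /vadd /vscl mulN1r addNr. Qed.
HB.instance Definition _ := GRing.isZmodule.Build Op opDA opDC op0D opND.

Lemma opMA : associative opM. Proof. by move=> *; apply: op_ext. Qed.
Lemma op1M : left_id op1 opM. Proof. by move=> *; apply: op_ext. Qed.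
Lemma opM1 : right_id op1 opM. Proof. by move=> *; apply: op_ext. Qed.
Lemma opMDl : left_distributive opM opD. Proof. by move=> *; apply: op_ext. Qed.
Lemma opMDr : right_distributive opM opD.
Proof. move=> [f [f1 f2]] g h; apply: op_ext => v n k /=. by rewrite f1. Qed.
Lemma op10 : op1 != 0.
Proof.
apply/eqP => /(congr1 (fun f : Op => f (fun _ _ => 1) 0 0)) /= /eqP.
by rewrite oner_eq0.
Qed.
HB.instance Definition _ := GRing.Zmodule_isNzRing.Build Op opMA op1M opM1 opMDl opMDr op10.

Lemma opZA a b v : opZ a (opZ b v) = opZ (a * b) v.
Proof. by apply: op_ext => * /=; rewrite /vscl mulrA. Qed.
Lemma opZ1 : left_id 1 opZ.
Proof. by move=> *; apply: op_ext => * /=; rewrite /vscl mul1r. Qed.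
Lemma opZDr : right_distributive opZ +%R.
Proof. by move=> *; apply: op_ext => * /=; rewrite /vscl /vadd mulrDr. Qed.
Lemma opZDl v : {morph opZ^~ v : a b / a + b}.
Proof. by move=> *; apply: op_ext => * /=; rewrite /vscl /vadd mulrDl. Qed.
HB.instance Definition _ := GRing.Zmodule_isLmodule.Build C Op opZA opZ1 opZDr opZDl.
Lemma opZAl a (u v : Op) : a *: (u * v) = (a *: u) * v.
Proof. by apply: op_ext. Qed.
HB.instance Definition _ := GRing.Lmodule_isLalgebra.Build C Op opZAl.
Lemma opZAr a (u v : Op) : a *: (u * v) = u * (a *: v).
Proof. case: u => [u [u1 u2]]; apply: op_ext => * /=. by rewrite u2. Qed.
HB.instance Definition _ := GRing.Lalgebra_isAlgebra.Build C Op opZAr.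

Lemma opMv (f g : Op) v : (f * g) v = f (g v). Proof. by []. Qed.
Lemma opDv (f g : Op) v n k : (f + g) v n k = f v n k + g v n k. Proof. by []. Qed.
Lemma opZv s (f : Op) v n k : (s *: f) v n k = s * f v n k. Proof. by []. Qed.
Lemma op1v v : (1 : Op) v = v. Proof. by []. Qed.

Variable q : R.
Hypothesis hq : q != 0.
Local Notation Q := (real_complex R q).
Lemma hQ : Q != 0.
Proof. by rewrite -(rmorph0 (real_complex R)) (inj_eq (@complexI _)). Qed.

Lemma linS (h : int -> int -> C) (sn sk : int -> int -> int) :
  islin (fun v n k => h n k * v (sn n k) (sk n k)).
Proof.
split=> *; apply: funext => n; apply: funext => k; rewrite /vadd /vscl.
  by rewrite mulrDr.
by rewrite mulrCA.
Qed.
Definition shop h sn sk := MkOp _ (linS h sn sk).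
Definition gA := shop (fun _ _ => 1) (fun n _ => n + 1) (fun _ k => k).
Definition gD := shop (fun n _ => 1 - Q ^ n * Q ^ n) (fun n _ => n - 1) (fun _ k => k).
Definition gB := shop (fun n _ => Q ^ n) (fun n _ => n) (fun _ k => k - 1).
Definition gC := shop (fun n _ => - Q ^ (n + 1)) (fun n _ => n) (fun _ k => k + 1).

Lemma shopv h sn sk v n k : shop h sn sk v n k = h n k * v (sn n k) (sk n k).
Proof. by []. Qed.

Lemma expQ1 (n : int) : Q ^ (n + 1) = Q ^ n * Q.
Proof. by rewrite expfzDr ?expr1z ?hQ. Qed.
Lemma expQN1 (n : int) : Q ^ (n - 1) = Q ^ n / Q.
Proof. by rewrite expfzDr ?hQ // -invr_expz expr1z. Qed. 

Lemma model_rels : SUq_rels q gA gB gC gD.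
Proof.
have hQ := hQ.
split; first split.
all: try (apply: op_ext => v n k; rewrite /= /vscl /vadd).
all: rewrite ?addrK ?subrK ?expQ1 ?expQN1 ?mul1r.
all: by field.
Qed.

Lemma gApow j w N z : (gA ^+ j) w N z = w (N + j%:Z) z.
Proof.
elim: j w N z => [|j IH] w N z; first by rewrite expr0 addr0.
rewrite exprSr opMv IH /= mul1r; congr (w _ z); lia.
Qed.
Lemma gBpow j w N z : (gB ^+ j) w N z = (Q ^ N) ^+ j * w N (z - j%:Z).
Proof.
elim: j w N z => [|j IH] w N z; first by rewrite expr0 subr0 mul1r.
rewrite exprSr opMv IH /= mulrA -exprSr; congr (_ * w _ _); lia.
Qed.
Lemma gCpow j w N z : (gC ^+ j) w N z = (- Q ^ (N + 1)) ^+ j * w N (z + j%:Z).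
Proof.
elim: j w N z => [|j IH] w N z; first by rewrite expr0 addr0 mul1r.
rewrite exprSr opMv IH /= mulrA -exprSr; congr (_ * w _ _); lia.
Qed.
Lemma factor_neq0 (t : int) : 0 < t -> (0 < q) -> (q < 1) -> 1 - Q ^ t * Q ^ t != 0.
Proof.
case: t => // t; rewrite ltz_nat => t0 q0 q1.
rewrite -!exprnP -exprD -rmorphXn -(rmorph1 (real_complex R)) -rmorphB.
rewrite -(rmorph0 (real_complex R)) (inj_eq (@complexI _)) subr_eq0 eq_sym.
rewrite lt_eqF // exprn_ilt1 ?ltW //; lia.
Qed.
Lemma gDpow j : (0 < q) -> (q < 1) -> exists E : int -> C, (forall N, j%:Z <= N -> E N != 0) /\
   forall w N z, (gD ^+ j) w N z = E N * w (N - j%:Z) z.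
Proof.
move=> q0 q1; elim: j => [|j [E [E0 IH]]].
  by exists (fun _ => 1); split => [*|w N z]; rewrite ?oner_neq0 // expr0 subr0 mul1r.
exists (fun N => E N * (1 - Q ^ (N - j%:Z) * Q ^ (N - j%:Z))); split.
  move=> N hN; rewrite mulf_neq0 ?E0 ?factor_neq0 //; lia.
move=> w N z; rewrite exprSr opMv IH /= mulrA; congr (_ * w _ _); lia.
Qed.
Definition Gz (z : int) : Op := match z with Posz j => gA ^+ j | Negz j => gD ^+ j.+1 end.
Lemma Gzpow z : 0 < q -> q < 1 -> exists E : int -> C, (forall N, 0 <= N + z -> E N != 0) /\
   forall w N k, Gz z w N k = E N * w (N + z) k.
Proof.
move=> q0 q1; case: z => j /=.
  by exists (fun _ => 1); split => [*|w N k]; rewrite ?oner_neq0 // gApow mul1r.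
have [E [E0 EE]] := gDpow j.+1 q0 q1.
exists E; split => [N hN|w N k]; first by apply: E0; move: hN; rewrite NegzE; lia.
by rewrite EE NegzE; congr (_ * w _ _); lia.
Qed.
Lemma opsumv (I : Type) (s : seq I) (F : I -> Op) v N k :
  (\sum_(p <- s) F p) v N k = \sum_(p <- s) F p v N k.
Proof.
elim: s => [|p s IH]; first by rewrite !big_nil.
by rewrite !big_cons opDv IH.
Qed.
End Model.

Section Alg.
Variables (R : realType) (q : R) (hq0 : 0 < q) (hq1 : q < 1) (A : algType R[i]) (a b c d : A).
Hypothesis hrel : SUq_rels q a b c d.
Local Notation Q := (real_complex R q).
Lemma hQ' : Q != 0.
Proof. by apply: hQ; rewrite gt_eqF. Qed.

Lemma powcomm (x y : A) (k : R[i]) m : x * y = k *: (y * x) ->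
  x * y ^+ m = k ^+ m *: (y ^+ m * x) /\ x ^+ m * y = k ^+ m *: (y * x ^+ m).
Proof.
move=> H; elim: m => [|m [IH1 IH2]]; first by split; rewrite !expr0 scale1r mulr1 mul1r.
split.
  rewrite exprSr mulrA IH1 -scalerAl -(mulrA _ x y) H -scalerAr scalerA mulrA.
  by rewrite -!exprSr.
rewrite exprS -mulrA IH2 -scalerAr (mulrA x y) H -scalerAl scalerA -mulrA.
by rewrite -exprSr -exprS.
Qed.

Arguments powcomm [x y k] m.

Lemma Lab : a * b = Q *: (b * a). Proof. by case: hrel => [[]]. Qed.
Lemma Lac : a * c = Q *: (c * a). Proof. by case: hrel => [[]]. Qed.
Lemma Lbd : b * d = Q *: (d * b). Proof. by case: hrel => [[]]. Qed.
Lemma Lcd : c * d = Q *: (d * c). Proof. by case: hrel => [[]]. Qed.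
Lemma Lbc : b * c = c * b. Proof. by case: hrel. Qed.
Lemma Lad : a * d = 1 + Q *: (b * c). Proof. by case: hrel. Qed.
Lemma Lda : d * a = 1 + Q^-1 *: (b * c). Proof. by case: hrel. Qed.

Lemma flip (x y : A) k : k != 0 -> x * y = k *: (y * x) -> y * x = k^-1 *: (x * y).
Proof. by move=> k0 ->; rewrite scalerA mulVf // scale1r. Qed.

Lemma Lba : b * a = Q^-1 *: (a * b). Proof. exact: flip hQ' Lab. Qed.
Lemma Lca : c * a = Q^-1 *: (a * c). Proof. exact: flip hQ' Lac. Qed.

Definition gz (z : int) : A := match z with Posz k => a ^+ k | Negz j => d ^+ j.+1 end.
Definition idx := (int * nat * nat)%type.
Definition BC m n := b ^+ m * c ^+ n.
Definition mon (i : idx) : A := gz i.1.1 * BC i.1.2 i.2.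
Definition span (s : seq (R[i] * idx)) : A := \sum_(p <- s) p.1 *: mon p.2.

Lemma BCa m n : BC m n * a = ((Q^-1) ^+ m * (Q^-1) ^+ n) *: (a * BC m n).
Proof.
rewrite /BC -mulrA (proj2 (powcomm n Lca)) -scalerAr (mulrA (b ^+ m) a) (proj2 (powcomm m Lba)).
by rewrite -scalerAl scalerA -mulrA [X in X *: _]mulrC.
Qed.
Lemma BCd m n : BC m n * d = (Q ^+ m * Q ^+ n) *: (d * BC m n).
Proof.
rewrite /BC -mulrA (proj2 (powcomm n Lcd)) -scalerAr (mulrA (b ^+ m) d) (proj2 (powcomm m Lbd)).
by rewrite -scalerAl scalerA -mulrA [X in X *: _]mulrC.
Qed.
Lemma BCb m n : BC m n * b = BC m.+1 n.
Proof.
have cb : c * b = 1 *: (b * c) by rewrite scale1r Lbc.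
by rewrite /BC -mulrA (proj2 (powcomm n cb)) expr1n scale1r mulrA -exprSr.
Qed.
Lemma BCc m n : BC m n * c = BC m n.+1.
Proof. by rewrite /BC -mulrA -exprSr. Qed.
Lemma bcBC m n : (b * c) * BC m n = BC m.+1 n.+1.
Proof.
have cb : c * b = 1 *: (b * c) by rewrite scale1r Lbc.
rewrite /BC -mulrA [c * _]mulrA (proj1 (powcomm m cb)) expr1n scale1r.
by rewrite -mulrA mulrA -exprS -exprS.
Qed.
Lemma BCbc m n : BC m n * (b * c) = BC m.+1 n.+1.
Proof. by rewrite mulrA BCb BCc. Qed.

Definition Sp x := exists s, x = span s.
Lemma Sp0 : Sp 0. Proof. by exists [::]; rewrite /span big_nil. Qed.
Lemma SpD x y : Sp x -> Sp y -> Sp (x + y).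
Proof. by move=> [s1 ->] [s2 ->]; exists (s1 ++ s2); rewrite /span big_cat. Qed.
Lemma SpZ k x : Sp x -> Sp (k *: x).
Proof.
move=> [s ->]; exists [seq (k * p.1, p.2) | p <- s].
rewrite /span big_map scaler_sumr; apply: eq_bigr => p _ /=; by rewrite scalerA.
Qed.
Lemma Spmon i : Sp (mon i).
Proof. by exists [:: (1, i)]; rewrite /span big_seq1 scale1r. Qed.
Lemma Spmon1 k i : Sp (k *: mon i). Proof. exact/SpZ/Spmon. Qed.
Lemma Spmon2 k1 i1 k2 i2 : Sp (k1 *: mon i1 + k2 *: mon i2).
Proof. exact/SpD/Spmon1/Spmon1. Qed.

Lemma gz_neg j : gz (- j%:Z) = d ^+ j.
Proof. by case: j. Qed.

Lemma mon_a i : Sp (mon i * a).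
Proof.
case: i => [[[k|j] m] n]; rewrite /mon /= -mulrA BCa -scalerAr mulrA.
  by rewrite -exprSr; apply: (Spmon1 _ (Posz k.+1, m, n)).
apply: SpZ; rewrite exprSr -(mulrA _ d a) Lda mulrDr mulr1 mulrDl.
rewrite -scalerAr -scalerAl -(mulrA _ (b * c)) bcBC -(gz_neg j).
by apply: SpD; [apply: (Spmon (- j%:Z, m, n)) | apply: (Spmon1 _ (- j%:Z, m.+1, n.+1))].
Qed.

Lemma mon_d i : Sp (mon i * d).
Proof.
case: i => [[[[|k]|j] m] n]; rewrite /mon /= -mulrA BCd -scalerAr mulrA.
- by rewrite expr0 mul1r -(expr1 d); apply: (Spmon1 _ (Negz 0, m, n)).
- apply: SpZ; rewrite exprSr -(mulrA _ a d) Lad mulrDr mulr1 mulrDl.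
  rewrite -scalerAr -scalerAl -(mulrA _ (b * c)) bcBC.
  by apply: SpD; [apply: (Spmon (Posz k, m, n)) | apply: (Spmon1 _ (Posz k, m.+1, n.+1))].
- by rewrite -exprSr; apply: (Spmon1 _ (Negz j.+1, m, n)).
Qed.

Lemma mon_b i : Sp (mon i * b).
Proof. by case: i => [[z m] n]; rewrite /mon /= -mulrA BCb; apply: (Spmon (z, m.+1, n)). Qed.
Lemma mon_c i : Sp (mon i * c).
Proof. by case: i => [[z m] n]; rewrite /mon /= -mulrA BCc; apply: (Spmon (z, m, n.+1)). Qed.

Lemma Sp_mulgen x y : y \in [:: a; b; c; d] -> Sp x -> Sp (x * y).
Proof.
move=> hy [s ->]; rewrite /span; elim: s => [|p s IH]; first by rewrite big_nil mul0r; exact: Sp0.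
rewrite big_cons mulrDl; apply: SpD => //; rewrite -scalerAl; apply: SpZ.
move: hy; rewrite !inE => /orP[/eqP->|/orP[/eqP->|/orP[/eqP->|/eqP->]]].
- exact: mon_a.
- exact: mon_b.
- exact: mon_c.
- exact: mon_d.
Qed.

Lemma Sp_mul x y : gen_subalg [:: a; b; c; d] y -> Sp x -> Sp (x * y).
Proof.
move=> hy; elim: hy x => {y}.
- by move=> y hy x; apply: Sp_mulgen.
- by move=> x; rewrite mulr1.
- by move=> y1 y2 _ IH1 _ IH2 x hx; rewrite mulrDr; apply: SpD; [apply: IH1|apply: IH2].
- by move=> k y _ IH x hx; rewrite -scalerAr; apply/SpZ/IH.
- by move=> y1 y2 _ IH1 _ IH2 x hx; rewrite mulrA; apply/IH2/IH1.
Qed.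

Lemma Sp_all (hgen : forall x : A, gen_subalg [:: a; b; c; d] x) x : Sp x.
Proof.
rewrite -(mul1r x); apply: Sp_mul => //.
have -> : (1 : A) = mon (Posz 0, 0%N, 0%N) by rewrite /mon /= /BC !expr0 !mulr1.
exact: Spmon.
Qed.

Hypothesis huniv : forall (S : algType R[i]) (a' b' c' d' : S), SUq_rels q a' b' c' d' ->
         exists f : A -> S,
           [/\ (forall x y, f (x + y) = f x + f y),
               (forall (k : R[i]) x, f (k *: x) = k *: f x),
               (forall x y, f (x * y) = f x * f y), f 1 = 1 &
               [/\ f a = a', f b = b', f c = c' & f d = d']].

Lemma Qinj : injective (fun M : nat => Q ^+ M).
Proof.
move=> i j /= /eqP; rewrite -!rmorphXn (inj_eq (@complexI _)) => /eqP.
by apply: ieexprIn => //; rewrite lt_eqF.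
Qed.

Lemma Qn0 n : Q ^+ n != 0. Proof. by rewrite expf_neq0 // hQ'. Qed.

Lemma indep s : span s = 0 -> forall i, \sum_(p <- s | p.2 == i) p.1 = 0.
Proof.
move=> hs [[z0 m0] n0].
have hq : q != 0 by rewrite gt_eqF.
have [f [fD fZ fM f1 [fa fb fc fd]]] := huniv _ _ _ _ _ (@model_rels R q hq).
have f0 : f 0 = 0.
  by have := fD 0 0; rewrite addr0 => /(congr1 (fun t => t - f 0)); rewrite addrK subrr.
have fX x n : f (x ^+ n) = (f x) ^+ n.
  by elim: n => [|n IH]; rewrite ?expr0 ?f1 // !exprS fM IH.
have fsum : f (span s) = \sum_(p <- s) p.1 *: f (mon p.2).
  rewrite /span; elim: s {hs} => [|p s IH]; first by rewrite !big_nil f0.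
  by rewrite !big_cons fD fZ IH.
have fmon i : f (mon i) = Gz R q i.1.1 * (gB R q ^+ i.1.2 * gC R q ^+ i.2).
  rewrite /mon fM /BC fM !fX fb fc; congr (_ * _).
  by case: i.1.1 => j /=; rewrite fX ?fa ?fd.
have [E0 [E0n E0E]] := @Gzpow R q hq z0 hq0 hq1.
pose c0 (n : nat) : R[i] := (-1) ^+ n * Q ^+ n.
pose cond (p : R[i] * idx) := (p.2.1.1 == z0) && (p.2.1.2%:Z - p.2.2%:Z == m0%:Z - n0%:Z).
have key (M : nat) : \sum_(p <- s | cond p) (p.1 * c0 p.2.2) * (Q ^+ M) ^+ (p.2.1.2 + p.2.2) = 0.
  pose dl : V R := fun N k => if (N == M%:Z) && (k == 0) then 1 else 0.
  have := congr1 (fun x => f x dl (M%:Z - z0) (m0%:Z - n0%:Z)) hs.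
  rewrite /= fsum f0 opsumv /=.
  have W (m n : nat) N k : (gB R q ^+ m) ((gC R q ^+ n) dl) N k =
      (Q ^ N) ^+ m * ((- Q ^ (N + 1)) ^+ n * dl N (k - m%:Z + n%:Z)).
    by rewrite (@gBpow R q hq) (@gCpow R q hq).
  have T p : vscl R p.1 (f (mon p.2) dl) (M%:Z - z0) (m0%:Z - n0%:Z) =
     if cond p then E0 (M%:Z - z0) * ((p.1 * c0 p.2.2) * (Q ^+ M) ^+ (p.2.1.2 + p.2.2)) else 0.
    rewrite /vscl.
    case: p => k [[z m] n]; rewrite /cond /= fmon opMv /=.
    have [->|zz] := eqVneq z z0.
      rewrite E0E subrK W /dl eqxx /=.
      have -> : (m0%:Z - n0%:Z - m%:Z + n%:Z == 0) = (m%:Z - n%:Z == m0%:Z - n0%:Z).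
        by apply/eqP/eqP; lia.
      case: ifP => _; last by rewrite !mulr0.
      rewrite (@expQ1 R q hq) -exprnP /c0 exprD [(- (_ * _)) ^+ _]exprNn exprMn.
      ring.
    have [Ez [_ EzE]] := @Gzpow R q hq z hq0 hq1.
    rewrite EzE W /dl.
    have -> : (M%:Z - z0 + z == M%:Z) = false by apply/eqP => E; move/eqP: zz; lia.
    by rewrite /= !mulr0.
  under eq_bigr => p _ do rewrite T.
  rewrite -big_mkcond /= -mulr_sumr => /eqP; rewrite mulf_eq0 => /orP[|/eqP //].
  by rewrite (negbTE (E0n _ _)) //; lia.
pose P : {poly R[i]} := \sum_(p <- s | cond p) (p.1 * c0 p.2.2) *: 'X^(p.2.1.2 + p.2.2).
have PM M : P.[Q ^+ M] = 0.
  rewrite horner_sum; under eq_bigr => p _ do rewrite hornerZ hornerXn; exact: key M.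
have P0 : P = 0.
  apply/eqP/negP => /negP nz.
  suff : false by [].
  rewrite -(ltnn (size P)) -{1}(size_mkseq (fun M => Q ^+ M) (size P)).
  apply: max_poly_roots nz _ _.
    by apply/allP => x /mapP [M _ ->]; rewrite /root PM.
  exact/mkseq_uniq/Qinj.
have := congr1 (fun p : {poly R[i]} => p`_(m0 + n0)) P0.
rewrite /= coef0 coef_sum big_mkcond /=.
rewrite (eq_bigr (fun p => if p.2 == (z0, m0, n0) then p.1 * c0 n0 else 0)).
  rewrite -big_mkcond -mulr_suml => /eqP; rewrite mulf_eq0 => /orP[/eqP //|].
  by rewrite /c0 mulf_eq0 signr_eq0 (negbTE (Qn0 _)).
case=> k [[z m] n] _ /=.
have [e|ne] := eqVneq ((z, m, n) : idx) (z0, m0, n0).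
  by case: e => -> -> ->; rewrite /cond /= !eqxx /= coefZ coefXn eqxx mulr1.
rewrite /cond /=; case: ifP => // /andP[/eqP ez /eqP emn].
rewrite coefZ coefXn.
have -> : (m0 + n0 == m + n)%N = false.
  apply/negbTE/eqP => h; move/eqP: ne; apply; rewrite ez; congr (_, _, _); lia.
by rewrite mulr0.
Qed.

Lemma sum_pred1 (T : eqType) (W : nmodType) (u : seq T) (G : T -> W) i0 :
  uniq u -> \sum_(i <- u | i == i0) G i = if i0 \in u then G i0 else 0.
Proof.
move=> uu; rewrite (eq_bigr (fun _ => G i0)) => [|i /eqP -> //].
rewrite big_const_seq.
have -> : count (fun i => i == i0) u = (i0 \in u) := count_uniq_mem i0 uu.
by case: (i0 \in u) => /=; rewrite ?addr0.
Qed.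

Lemma regroup s : span s =
  \sum_(i <- undup (map snd s)) (\sum_(p <- s | p.2 == i) p.1) *: mon i.
Proof.
rewrite /span.
transitivity (\sum_(i <- undup (map snd s)) \sum_(p <- s) (if p.2 == i then p.1 *: mon p.2 else 0)); last first.
  apply: eq_bigr => i _; rewrite scaler_suml -big_mkcond; apply: eq_bigr => p /eqP -> //.
rewrite exchange_big /=; apply: eq_big_seq => p ps.
rewrite -big_mkcond /=.
under eq_bigl => i do rewrite eq_sym.
rewrite sum_pred1 ?undup_uniq // mem_undup; case: ifP => //.
by move/negP; case; apply/mapP; exists p.
Qed.

Lemma Qpow_neq1 k : (0 < k)%N -> Q ^+ k != 1.
Proof.
move=> k0; rewrite -rmorphXn -(rmorph1 (real_complex R)) (inj_eq (@complexI _)).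
by rewrite lt_eqF // exprn_ilt1 ?ltW // -lt0n.
Qed.

Definition lam (z : int) : R[i] :=
  match z with Posz k => (Q ^+ (k + k))^-1 | Negz j => Q ^+ (j.+1 + j.+1) end.
Lemma lam_neq1 z : z != 0 -> lam z != 1.
Proof.
case: z => [[|k]|j] //= _; last by apply: Qpow_neq1.
by rewrite invr_eq1 Qpow_neq1.
Qed.

Lemma bc_a : (b * c) * a = (Q^-1 * Q^-1) *: (a * (b * c)).
Proof.
by rewrite -mulrA Lca -scalerAr (mulrA b a c) Lba -scalerAl scalerA -mulrA.
Qed.
Lemma bc_d : (b * c) * d = (Q * Q) *: (d * (b * c)).
Proof.
by rewrite -mulrA Lcd -scalerAr (mulrA b d c) Lbd -scalerAl scalerA -mulrA.
Qed.
Lemma bc_gz z : (b * c) * gz z = lam z *: (gz z * (b * c)).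
Proof.
case: z => [k|j] /=.
  rewrite (proj1 (powcomm k bc_a)) exprMn -exprD -exprVn.
  done.
rewrite (proj1 (powcomm j.+1 bc_d)) exprMn -exprD //.
Qed.

Definition sh (i : idx) : idx := (i.1.1, i.1.2.+1, i.2.+1).
Lemma sh_inj : injective sh.
Proof. by case=> [[z m] n] [[z' m'] n'] [-> -> ->]. Qed.
Lemma mon_bc i : mon i * (b * c) = mon (sh i).
Proof. by rewrite /mon -mulrA BCbc. Qed.
Lemma bc_mon i : (b * c) * mon i = lam i.1.1 *: mon (sh i).
Proof. by rewrite /mon mulrA bc_gz -scalerAl -mulrA bcBC. Qed.

Definition hh (i : idx) : idx := (Posz 1, i.1.2.+1, i.2).
Definition mu (i : idx) : R[i] := (Q ^+ (i.1.2 + i.2))^-1.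
Lemma mon0_ab i : i.1.1 = 0 -> mon i * (a * b) = mu i *: mon (hh i).
Proof.
case: i => [[z m] n] /= ->; rewrite /mon /= expr0 mul1r mulrA BCa -scalerAl -mulrA BCb.
by rewrite expr1 /mu exprVn exprVn -invfM -exprD.
Qed.
Lemma ab_mon0 i : i.1.1 = 0 -> (a * b) * mon i = mon (hh i).
Proof.
case: i => [[z m] n] /= ->; rewrite /mon /= expr0 mul1r expr1 /BC.
by rewrite -!mulrA [b * _]mulrA -exprS.
Qed.

Lemma central (hgen : forall x : A, gen_subalg [:: a; b; c; d] x) x :
  x * (b * c) = (b * c) * x -> x * (a * b) = (a * b) * x -> exists k : R[i], x = k%:A.
Proof.
move=> h1 h2.
have [s xs] := Sp_all hgen x.
set u := undup (map snd s).
set F := fun i => \sum_(p <- s | p.2 == i) p.1.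
have uu : uniq u by apply: undup_uniq.
have xu : x = \sum_(i <- u) F i *: mon i by rewrite xs regroup.
have step1 j : j \in u -> j.1.1 != 0 -> F j = 0.
  move=> ju jz.
  pose s1 := [seq (F i * lam i.1.1 - F i, sh i) | i <- u].
  have s10 : span s1 = 0.
    rewrite /span big_map /=.
    under eq_bigr => i _ do rewrite scalerBl.
    rewrite sumrB; apply/eqP; rewrite subr_eq0; apply/eqP.
    transitivity ((b * c) * x).
      rewrite xu mulr_sumr; apply: eq_bigr => i _.
      by rewrite -scalerAr bc_mon scalerA.
    rewrite -h1 xu mulr_suml; apply: eq_bigr => i _.
    by rewrite -scalerAl mon_bc.
  have := indep _ s10 (sh j); rewrite /s1 big_map /=.
  under eq_bigl => i do rewrite (inj_eq sh_inj).
  rewrite sum_pred1 // ju => /eqP; rewrite -{2}(mulr1 (F j)) -mulrBr mulf_eq0.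
  by rewrite subr_eq0 (negbTE (lam_neq1 _ jz)) orbF => /eqP.
have step2 j : j \in u -> j.1.1 = 0 -> (0 < j.1.2 + j.2)%N -> F j = 0.
  move=> ju jz jmn.
  pose s2 := [seq (F i * mu i - F i, hh i) | i <- u].
  have Fz i : i \in u -> i.1.1 != 0 -> F i *: mon i = 0.
    by move=> iu iz; rewrite step1 // scale0r.
  have s20 : span s2 = 0.
    rewrite /span big_map /=.
    under eq_bigr => i _ do rewrite scalerBl.
    rewrite sumrB; apply/eqP; rewrite subr_eq0; apply/eqP.
    transitivity (x * (a * b)).
      rewrite xu mulr_suml; apply: eq_big_seq => i iu.
      have [iz|iz] := eqVneq i.1.1 0.
        by rewrite -scalerAl mon0_ab // scalerA.
      by rewrite step1 // !mul0r !scale0r mul0r.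
    rewrite h2 xu mulr_sumr; apply: eq_big_seq => i iu.
    have [iz|iz] := eqVneq i.1.1 0.
      by rewrite -scalerAr ab_mon0.
    by rewrite step1 // !scale0r mulr0.
  have := indep _ s20 (hh j); rewrite /s2 big_map /=.
  rewrite big_mkcond /= (eq_big_seq (fun i => if i == j then F i * mu i - F i else 0)).
    rewrite -big_mkcond /= sum_pred1 // ju => /eqP.
    rewrite -{2}(mulr1 (F j)) -mulrBr mulf_eq0 subr_eq0 /mu invr_eq1.
    by rewrite (negbTE (Qpow_neq1 _ jmn)) orbF => /eqP.
  move=> i iu; have [iz|iz] := eqVneq i.1.1 0.
    congr (if _ then _ else _); apply/eqP/eqP => [|-> //].
    move: iz jz; case: i {iu} => [[z m] n]; case: j {ju jmn} => [[z' m'] n'] /=.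
    by move=> -> -> [-> ->].
  by rewrite step1 // mul0r subrr; case: ifP; case: ifP.
pose i0 : idx := (Posz 0, 0%N, 0%N).
exists (if i0 \in u then F i0 else 0).
rewrite xu (eq_big_seq (fun i => if i == i0 then F i *: mon i else 0)).
  rewrite -big_mkcond /= sum_pred1 //; case: ifP => _; last by rewrite scale0r.
  by rewrite /mon /= /BC !expr0 !mulr1.
move=> [[z m] n] iu; case: ifP => // /eqP ne.
have [zz|zz] := eqVneq z 0.
  subst z.
  have mn : (0 < m + n)%N.
    by move: ne; case: m {iu} => [|m]; case: n => [|n] //= ne; case: (ne erefl).
  by rewrite step2 ?scale0r.
by rewrite step1 ?scale0r.
Qed.
End Alg.

Theorem mainTheorem15 (R : realType) (q : R) (hq0 : 0 < q) (hq1 : q < 1)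
  (A : algType R[i]) (a b c d : A) (st : A -> A)
  (hA : is_OSUq2 q a b c d) (hst : is_SUq_star q a b c d st)
  (x : A) (hx : forall y : A, podles q a b c d st y -> x * y = y * x) :
  exists k : R[i], x = k%:A.
Proof.
case: hA => hrel hgen huniv.
have Qi0 : (real_complex R q)^-1 != 0 by rewrite invr_neq0 // hQ' .
apply: (@central R q hq0 hq1 A a b c d hrel huniv hgen x).
  have h : podles q a b c d st (- ((real_complex R q)^-1 *: (b * c))).
    by apply: gen_base; rewrite !inE eqxx.
  move: (hx _ h); rewrite mulrN mulNr -scalerAr -scalerAl => /oppr_inj.
  exact: scalerI.
have h : podles q a b c d st (- ((real_complex R q)^-1 *: (a * b))).
  by apply: gen_base; rewrite !inE eqxx orbT.
move: (hx _ h); rewrite mulrN mulNr -scalerAr -scalerAl => /oppr_inj.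
exact: scalerI.
Qed.
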